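(* Let $X,Y\in\Sigma^*$ and let $\mathcal{A},\mathcal{A}'$ be alignments of $X$ onto $Y$. If $\mathcal{A}$ and $\mathcal{A}'$, viewed as paths in the alignment graph of $X$ and $Y$, do not contain any common diagonal edge, then $\mathrm{selfed}(X)\le\mathrm{ed}_{\mathcal{A}}(X,Y)+\mathrm{ed}_{\mathcal{A}'}(X,Y)$.
   Context: An alignment of $X$ onto $Y$ is a sequence $(x_t,y_t)_{t=0}^m$ from $(0,0)$ to $(|X|,|Y|)$ with steps $(1,0)$, $(0,1)$ or $(1,1)$; viewed as a path in the grid graph on $[0,|X|]\times[0,|Y|]$, a step $(x,y)\to(x+1,y+1)$ is a diagonal edge. $\mathrm{ed}_{\mathcal{A}}(X,Y)$ is the unweighted cost of $\mathcal{A}$: the number of steps $(1,0)$, $(0,1)$, and diagonal steps $(x,y)\to(x+1,y+1)$ with $X[x]\ne Y[y]$. A self-alignment of $X$ is an alignment of $X$ onto $X$ containing no edge $(x,x)\to(x+1,x+1)$; $\mathrm{selfed}(X)$ is the minimum unweighted cost of a self-alignment. *)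

(* Defs.v *)
From Stdlib Require Import ClassicalEpsilon.
From mathcomp Require Import all_boot zify.
Set Implicit Arguments. Unset Strict Implicit. Unset Printing Implicit Defensive.

(* Strings over an alphabet Sigma are  seq Sigma  with Sigma : eqType.
   An alignment of X onto Y is represented by its sequence of grid points
   (x_0,y_0), ..., (x_m,y_m). *)

Definition step_ok (p q : nat * nat) : bool :=
  [|| (q == (p.1.+1, p.2)), (q == (p.1, p.2.+1)) | (q == (p.1.+1, p.2.+1))].

Definition is_diag (p q : nat * nat) : bool := q == (p.1.+1, p.2.+1).

Definition is_alignment (Sigma : eqType) (X Y : seq Sigma) (A : seq (nat * nat)) : Prop :=
  match A with
  | [::] => False
  | p0 :: rest => [/\ p0 = (0, 0), last p0 rest = (size X, size Y)
                    & path step_ok p0 rest]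
  end.

Definition edges (A : seq (nat * nat)) : seq ((nat * nat) * (nat * nat)) :=
  match A with
  | [::] => [::]
  | p0 :: rest => zip (p0 :: rest) rest
  end.

Definition diag_edges (A : seq (nat * nat)) : seq ((nat * nat) * (nat * nat)) :=
  [seq e <- edges A | is_diag e.1 e.2].

Definition step_cost (Sigma : eqType) (X Y : seq Sigma) (e : (nat * nat) * (nat * nat)) : nat :=
  if is_diag e.1 e.2 then
    (if (e.1.1 < size X) && (e.1.2 < size Y) then
       match nth None (map Some X) e.1.1, nth None (map Some Y) e.1.2 with
       | Some a, Some b => nat_of_bool (a != b)
       | _, _ => 1
       end
     else 1)
  else 1.

Definition ed_align (Sigma : eqType) (X Y : seq Sigma) (A : seq (nat * nat)) : nat :=
  \sum_(e <- edges A) step_cost X Y e.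

Definition is_self_alignment (Sigma : eqType) (X : seq Sigma) (A : seq (nat * nat)) : Prop :=
  is_alignment X X A /\ forall x, ((x, x), (x.+1, x.+1)) \notin edges A.

(* witness: the path (0,0),(0,1),...,(0,n),(1,n),...,(n,n) *)
Fixpoint hpath (x y k : nat) : seq (nat * nat) :=
  match k with 0 => [::] | k'.+1 => (x.+1, y) :: hpath x.+1 y k' end.
Fixpoint vpath (x y k : nat) : seq (nat * nat) :=
  match k with 0 => [::] | k'.+1 => (x, y.+1) :: vpath x y.+1 k' end.

Lemma vpath_ok x y k : path step_ok (x, y) (vpath x y k) /\ last (x, y) (vpath x y k) = (x, y + k)
   /\ forall e, e \in zip ((x, y) :: vpath x y k) (vpath x y k) -> ~~ is_diag e.1 e.2.
Proof.
elim: k x y => [|k IH] x y /=; first by rewrite addn0; split=> //; split=> //.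
have [H1 [H2 H3]] := IH x y.+1.
split; first by rewrite H1 /step_ok eqxx /= orbT.
split; first by rewrite H2 addSnnS.
move=> e; rewrite inE => /orP [/eqP -> | He]; last exact: H3.
rewrite /is_diag /=; apply/negP => /eqP [] H; lia.
Qed.

Lemma hpath_ok x y k : path step_ok (x, y) (hpath x y k) /\ last (x, y) (hpath x y k) = (x + k, y)
   /\ forall e, e \in zip ((x, y) :: hpath x y k) (hpath x y k) -> ~~ is_diag e.1 e.2.
Proof.
elim: k x y => [|k IH] x y /=; first by rewrite addn0; split=> //; split=> //.
have [H1 [H2 H3]] := IH x.+1 y.
split; first by rewrite H1 /step_ok eqxx.
split; first by rewrite H2 addSnnS.
move=> e; rewrite inE => /orP [/eqP -> | He]; last exact: H3.
rewrite /is_diag /=; apply/negP => /eqP [] H; lia.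
Qed.

Lemma zip_cons_cat (T : Type) (a : T) (s t : seq T) :
  zip (a :: s ++ t) (s ++ t) = zip (a :: s) s ++ zip (last a s :: t) t.
Proof. by elim: s a => [|b s IH] a //=; rewrite IH. Qed.

Lemma selfed_exists (Sigma : eqType) (X : seq Sigma) :
  exists k, exists A, is_self_alignment X A /\ ed_align X X A = k.
Proof.
set n := size X.
exists (ed_align X X ((0, 0) :: vpath 0 0 n ++ hpath 0 n n)).
exists ((0, 0) :: vpath 0 0 n ++ hpath 0 n n); split=> //.
have [V1 [V2 V3]] := vpath_ok 0 0 n.
have [H1 [H2 H3]] := hpath_ok 0 n n.
rewrite add0n in V2; rewrite add0n in H2.
split.
  rewrite /is_alignment last_cat V2 H2 cat_path V1 V2 H1; split=> //.
move=> x; apply/negP => Hin.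
have Hd : is_diag (x, x) (x.+1, x.+1) by rewrite /is_diag.
move: Hin; rewrite /edges.
rewrite zip_cons_cat V2.
rewrite mem_cat => /orP [H | H].
  by move: (V3 _ H); rewrite Hd.
by move: (H3 _ H); rewrite Hd.
Qed.

Definition has_self_cost (Sigma : eqType) (X : seq Sigma) (k : nat) : bool :=
  if excluded_middle_informative
       (exists A, is_self_alignment X A /\ ed_align X X A = k) then true else false.

Lemma has_self_cost_exists (Sigma : eqType) (X : seq Sigma) : exists k, has_self_cost X k.
Proof.
have [k Hk] := selfed_exists X; exists k.
by rewrite /has_self_cost; case: excluded_middle_informative.
Qed.

Definition selfed (Sigma : eqType) (X : seq Sigma) : nat :=
  ex_minn (has_self_cost_exists X).

(* Main.v *)
Require Import Defs.
From mathcomp Require Import all_boot.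
From mathcomp Require Import zify.
From Stdlib Require Import ClassicalEpsilon.
Set Implicit Arguments. Unset Strict Implicit. Unset Printing Implicit Defensive.

Inductive aop := aH | aV | aD.

Definition mv (o : aop) (p : nat * nat) : nat * nat :=
  match o with aH => (p.1.+1, p.2) | aV => (p.1, p.2.+1) | aD => (p.1.+1, p.2.+1) end.

Fixpoint trace (p : nat * nat) (s : seq aop) : seq (nat * nat) :=
  match s with [::] => [::] | o :: r => mv o p :: trace (mv o p) r end.

Fixpoint xs (s : seq aop) : nat :=
  match s with [::] => 0 | o :: r => if o is aV then xs r else (xs r).+1 end.
Fixpoint ys (s : seq aop) : nat :=
  match s with [::] => 0 | o :: r => if o is aH then ys r else (ys r).+1 end.

Lemma last_trace p s : last p (trace p s) = (p.1 + xs s, p.2 + ys s).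
Proof.
elim: s p => [|o r IH] [a b] /=; first by rewrite !addn0.
rewrite IH; case: o => /=; f_equal; lia.
Qed.

Lemma path_trace p s : path step_ok p (trace p s).
Proof.
elim: s p => [|o r IH] [a b] //=; rewrite IH andbT; case: o;
  by rewrite /step_ok /= eqxx ?orbT.
Qed.

Lemma trace_of_path p r : path step_ok p r -> exists s, r = trace p s.
Proof.
elim: r p => [|q r IH] p /=; first by exists [::].
move=> /andP [Hst Hp]; have [s ->] := IH q Hp.
move: Hst; rewrite /step_ok => /or3P [] /eqP ->;
  [exists (aH :: s) | exists (aV :: s) | exists (aD :: s)]; by [].
Qed.

Lemma edges_trace_cons p o r :
  edges (p :: trace p (o :: r)) = (p, mv o p) :: edges (mv o p :: trace (mv o p) r).
Proof. by []. Qed.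

Fixpoint ocost (Sigma : eqType) (X Y : seq Sigma) p (s : seq aop) : nat :=
  match s with [::] => 0 | o :: r => step_cost X Y (p, mv o p) + ocost X Y (mv o p) r end.

Lemma ed_trace (Sigma : eqType) (X Y : seq Sigma) p s :
  ed_align X Y (p :: trace p s) = ocost X Y p s.
Proof.
elim: s p => [|o r IH] p; first by rewrite /ed_align /= big_nil.
have := IH (mv o p); rewrite /ed_align edges_trace_cons big_cons /= => ->.
by [].
Qed.

Fixpoint dpos (p : nat * nat) (s : seq aop) : seq (nat * nat) :=
  match s with [::] => [::]
  | o :: r => if o is aD then p :: dpos (mv o p) r else dpos (mv o p) r end.

Lemma dpos_edges p s q :
  ((q, (q.1.+1, q.2.+1)) \in edges (p :: trace p s)) = (q \in dpos p s).
Proof.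
elim: s p => [|o r IH] p; first by [].
rewrite edges_trace_cons in_cons IH; clear IH.
case: o; rewrite /=.
  - case: p => a b; case: q => c d /=.
    case: eqP => [H|//]; exfalso; case: H => *; lia.
  - case: p => a b; case: q => c d /=.
    case: eqP => [H|//]; exfalso; case: H => *; lia.
  - rewrite in_cons; congr (_ || _).
    by case: p => a b; case: q => c d; apply/eqP/eqP => [[-> ->]|[-> ->]].
Qed.

Definition dcost (Sigma : eqType) (X Y : seq Sigma) x y :=
  step_cost X Y ((x, y), (x.+1, y.+1)).

Lemma sc_mv (Sigma : eqType) (X Y : seq Sigma) o p :
  step_cost X Y (p, mv o p) = if o is aD then dcost X Y p.1 p.2 else 1.
Proof.
case: p => x y; case: o => //=; rewrite /step_cost /is_diag /=;
  case: ifP => //; move/eqP => H; exfalso; case: H => *; lia.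
Qed.

Lemma scH (Sigma : eqType) (X Y : seq Sigma) x y : step_cost X Y ((x,y),(x.+1,y)) = 1.
Proof. exact: (sc_mv X Y aH (x,y)). Qed.
Lemma scV (Sigma : eqType) (X Y : seq Sigma) x y : step_cost X Y ((x,y),(x,y.+1)) = 1.
Proof. exact: (sc_mv X Y aV (x,y)). Qed.
Lemma scD (Sigma : eqType) (X Y : seq Sigma) x y : step_cost X Y ((x,y),(x.+1,y.+1)) = dcost X Y x y.
Proof. by []. Qed.

Lemma dcost_le1 (Sigma : eqType) (X Y : seq Sigma) x y : dcost X Y x y <= 1.
Proof.
rewrite /dcost /step_cost /is_diag eqxx /=.
case: ifP => // _; case: nth => [a|] //; case: nth => [b|] //; by case: (a != b).
Qed.

Lemma dcost0 (Sigma : eqType) (X Y : seq Sigma) x y : dcost X Y x y = 0 ->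
  exists a, [/\ nth None (map Some X) x = Some a, nth None (map Some Y) y = Some a,
     x < size X & y < size Y].
Proof.
rewrite /dcost /step_cost /is_diag eqxx /=.
case: ifP => // /andP [H1 H2]; case Ea: (nth None (map Some X) x) => [a|] //; case Eb: (nth None (map Some Y) y) => [b|] //.
by case: eqP => // -> _; exists b.
Qed.

Lemma tri (Sigma : eqType) (X Y : seq Sigma) x y z :
  dcost X X x z <= dcost X Y x y + dcost X Y z y.
Proof.
case E1: (dcost X Y x y) => [|k]; last by have := dcost_le1 X X x z; lia.
case E2: (dcost X Y z y) => [|k]; last by have := dcost_le1 X X x z; lia.
have [a [A1 A2 A3 A4]] := dcost0 E1.
have [b [B1 B2 B3 B4]] := dcost0 E2.
move: A2; rewrite B2 => -[Eab]; subst b.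
by rewrite /dcost /step_cost /is_diag eqxx /= A3 B3 A1 B1 eqxx.
Qed.

Fixpoint comp (o1 o2 : seq aop) {struct o1} : seq aop :=
  match o1 with
  | [::] => [seq aV | _ <- o2]
  | a :: r1 =>
    if a is aH then aH :: comp r1 o2 else
    (fix inner (o2 : seq aop) : seq aop :=
       match o2 with
       | [::] => [::]
       | aH :: r2 => aV :: inner r2
       | aV :: r2 => if a is aV then comp r1 r2 else aH :: comp r1 r2
       | aD :: r2 => if a is aV then aV :: comp r1 r2 else aD :: comp r1 r2
       end) o2
  end.

Lemma comp_nil_l o2 : comp [::] o2 = [seq aV | _ <- o2]. Proof. by []. Qed.
Lemma comp_H1 r1 o2 : comp (aH :: r1) o2 = aH :: comp r1 o2. Proof. by []. Qed.
Lemma comp_V0 r1 : comp (aV :: r1) [::] = [::]. Proof. by []. Qed.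
Lemma comp_D0 r1 : comp (aD :: r1) [::] = [::]. Proof. by []. Qed.
Lemma comp_VH r1 r2 : comp (aV :: r1) (aH :: r2) = aV :: comp (aV :: r1) r2. Proof. by []. Qed.
Lemma comp_DH r1 r2 : comp (aD :: r1) (aH :: r2) = aV :: comp (aD :: r1) r2. Proof. by []. Qed.
Lemma comp_VV r1 r2 : comp (aV :: r1) (aV :: r2) = comp r1 r2. Proof. by []. Qed.
Lemma comp_VD r1 r2 : comp (aV :: r1) (aD :: r2) = aV :: comp r1 r2. Proof. by []. Qed.
Lemma comp_DV r1 r2 : comp (aD :: r1) (aV :: r2) = aH :: comp r1 r2. Proof. by []. Qed.
Lemma comp_DD r1 r2 : comp (aD :: r1) (aD :: r2) = aD :: comp r1 r2. Proof. by []. Qed.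

Arguments comp : simpl never.

Lemma comp_sums o1 o2 : ys o1 = ys o2 ->
  xs (comp o1 o2) = xs o1 /\ ys (comp o1 o2) = xs o2.
Proof.
elim: o1 o2 => [|a r1 IH] o2.
  rewrite comp_nil_l; elim: o2 => [|b r2 IH2] //=.
  by case: b => //= H; have [-> ->] := IH2 H.
case: a => [|Hys|Hys].
- by rewrite comp_H1 /= => H; have [-> ->] := IH o2 H.
- elim: o2 Hys => [|b r2 IH2] //; case: b => Hys.
  + by rewrite comp_VH /=; have [-> ->] := IH2 Hys.
  + by rewrite comp_VV; apply: IH; by move: Hys => /= -[].
  + by rewrite comp_VD /=; have [-> ->] := IH r2 ltac:(by move: Hys => /= -[]).
- elim: o2 Hys => [|b r2 IH2] //; case: b => Hys.
  + by rewrite comp_DH /=; have [-> ->] := IH2 Hys.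
  + by rewrite comp_DV /=; have [-> ->] := IH r2 ltac:(by move: Hys => /= -[]).
  + by rewrite comp_DD /=; have [-> ->] := IH r2 ltac:(by move: Hys => /= -[]).
Qed.

Lemma comp_cost (Sigma : eqType) (X Y : seq Sigma) o1 o2 x y z : ys o1 = ys o2 ->
  ocost X X (x, z) (comp o1 o2) <= ocost X Y (x, y) o1 + ocost X Y (z, y) o2.
Proof.
elim: o1 x y z o2 => [|a r1 IH] x y z o2.
  rewrite comp_nil_l; elim: o2 z => [|b r2 IH2] z //=.
  case: b => //= H; rewrite ?scH ?scV ?scD /=; have := IH2 z.+1 H; rewrite /= ?scH ?scV ?scD; lia.
case: a => [|Hys|Hys].
- rewrite comp_H1 /= => H; rewrite ?scH ?scV ?scD /=; have := IH x.+1 y z o2 H; rewrite /= ?scH ?scV ?scD; lia.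
- elim: o2 z Hys => [|b r2 IH2] z //; case: b => Hys.
  + rewrite comp_VH /= ?scH ?scV ?scD /=; have := IH2 z.+1 Hys; rewrite /= ?scH ?scV ?scD /=; rewrite /= ?scH ?scV ?scD; lia.
  + rewrite comp_VV ?scH ?scV ?scD /=; have := IH x y.+1 z r2 ltac:(by move: Hys => /= -[]); rewrite /= ?scH ?scV ?scD; lia.
  + rewrite comp_VD /= ?scH ?scV ?scD /=; have := IH x y.+1 z.+1 r2 ltac:(by move: Hys => /= -[]); rewrite /= ?scH ?scV ?scD; lia.
- elim: o2 z Hys => [|b r2 IH2] z //; case: b => Hys.
  + rewrite comp_DH /= ?scH ?scV ?scD /=; have := IH2 z.+1 Hys; rewrite /= ?scH ?scV ?scD /=; rewrite /= ?scH ?scV ?scD; lia.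
  + rewrite comp_DV /= ?scH ?scV ?scD /=; have := IH x.+1 y.+1 z r2 ltac:(by move: Hys => /= -[]); rewrite /= ?scH ?scV ?scD; lia.
  + rewrite comp_DD /= ?scH ?scV ?scD /=; have := IH x.+1 y.+1 z.+1 r2 ltac:(by move: Hys => /= -[]); rewrite /= ?scH ?scV ?scD.
    have := tri X Y x y z; rewrite /= ?scH ?scV ?scD; lia.
Qed.

Lemma dpos_mapV p (s : seq aop) : dpos p [seq aV | _ <- s] = [::].
Proof. by elim: s p => [|b s IH] p //=. Qed.

Lemma comp_nodiag o1 o2 x y z :
  (forall q, q \in dpos (x, y) o1 -> q \notin dpos (z, y) o2) ->
  forall w, (w, w) \notin dpos (x, z) (comp o1 o2).
Proof.
elim: o1 x y z o2 => [|a r1 IH] x y z o2.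
  by rewrite comp_nil_l dpos_mapV.
case: a => Hd.
- rewrite comp_H1 /=; exact: (IH x.+1 y z o2 Hd).
- elim: o2 z Hd => [|b r2 IH2] z Hd; first by rewrite comp_V0.
  case: b Hd => Hd.
  + rewrite comp_VH /=; exact: (IH2 z.+1 Hd).
  + rewrite comp_VV; exact: (IH x y.+1 z r2 Hd).
  + rewrite comp_VD /=; apply: (IH x y.+1 z.+1 r2) => q Hq.
    by have := Hd q Hq; rewrite /= in_cons negb_or => /andP [].
- elim: o2 z Hd => [|b r2 IH2] z Hd; first by rewrite comp_D0.
  case: b Hd => Hd.
  + rewrite comp_DH /=; exact: (IH2 z.+1 Hd).
  + rewrite comp_DV /=; apply: (IH x.+1 y.+1 z r2) => q Hq.
    by apply: Hd; rewrite /= in_cons Hq orbT.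
  + rewrite comp_DD /= => w; rewrite in_cons negb_or; apply/andP; split.
      apply/negP => /eqP [Ex Ez]; subst x z.
      by have := Hd (w, y); rewrite /= !in_cons eqxx /= => /(_ isT).
    apply: (IH x.+1 y.+1 z.+1 r2 _ w) => q Hq.
    have := Hd q; rewrite /= !in_cons Hq orbT negb_or => /(_ isT) /andP [].
    by [].
Qed.

Theorem lemma4p3 (Sigma : eqType) (X Y : seq Sigma) (A A' : seq (nat * nat)) :
  is_alignment X Y A -> is_alignment X Y A' ->
  (forall e, e \in diag_edges A -> e \notin diag_edges A') ->
  (selfed X <= ed_align X Y A + ed_align X Y A')%N.
Proof.
case: A => [|p0 r] //; case: A' => [|p0' r'] //.
move=> [Hp0 Hl Hp] [Hp0' Hl' Hp'] Hdisj; subst p0 p0'.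
have [s1 Hs1] := trace_of_path Hp; have [s2 Hs2] := trace_of_path Hp'; subst r r'.
move: Hl Hl'; rewrite !last_trace /= !add0n => -[Hx1 Hy1] [Hx2 Hy2].
have Hys : ys s1 = ys s2 by rewrite Hy1 Hy2.
have [Sx Sy] := comp_sums Hys.
set C := (0, 0) :: trace (0, 0) (comp s1 s2).
have HC : is_self_alignment X C.
  split.
    rewrite /C /is_alignment last_trace /= !add0n Sx Sy Hx1 Hx2; split => //.
    exact: path_trace.
  move=> w.
  rewrite /C -[(w.+1, w.+1)]/((w, w).1.+1, (w, w).2.+1) dpos_edges.
  apply: (@comp_nodiag s1 s2 0 0 0) => q Hq.
  have := Hdisj (q, (q.1.+1, q.2.+1)).
  rewrite /diag_edges !mem_filter /is_diag /= eqxx /= !dpos_edges.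
  by move=> /(_ Hq).
have -> : ed_align X Y ((0, 0) :: trace (0, 0) s1) + ed_align X Y ((0, 0) :: trace (0, 0) s2)
  = ocost X Y (0, 0) s1 + ocost X Y (0, 0) s2 by rewrite !ed_trace.
apply: (@leq_trans (ed_align X X C)); last first.
  by rewrite /C ed_trace; exact: comp_cost.
rewrite /selfed; case: ex_minnP => m _ Hmin; apply: Hmin.
rewrite /has_self_cost; case: excluded_middle_informative => // [][].
by exists C.
Qed.
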